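(* For any special object $L$ of $\mathcal V$, one has $\mathbb O_L(u)=(-1)^t\dfrac{m_L(-u)}{m_L(u)}$.
   Context: Let $\Bbbk$ be a field of characteristic $\neq2$, $t\in\{0,1\}$, and let $\mathcal{NB}_t$ be the nil-Brauer category, here regarded as an ungraded strict $\Bbbk$-linear monoidal category (tensor $\star$, unit $\mathbb1$, composition $\circ$) generated by an object $B$ and morphisms $x:B\to B$, $\tau:B\star B\to B\star B$, $\cap:B\star B\to\mathbb1$, $\cup:\mathbb1\to B\star B$ with relations ($1=1_B$): $\tau\circ\tau=0$; $(\tau\star1)\circ(1\star\tau)\circ(\tau\star1)=(1\star\tau)\circ(\tau\star1)\circ(1\star\tau)$; $\cap\circ\cup=t1_{\mathbb1}$; $(\cap\star1)\circ(1\star\cup)=1=(1\star\cap)\circ(\cup\star1)$; $\cap\circ\tau=0$; $(1\star\cap)\circ(\tau\star1)=(\cap\star1)\circ(1\star\tau)$; $(x\star1)\circ\tau-\tau\circ(1\star x)=1\star1-\cup\circ\cap$; $\cap\circ(1\star x)=-\cap\circ(x\star1)$. Let $\mathcal V$ be a strict $\mathcal{NB}_t$-module category: a $\Bbbk$-linear category with a strict $\Bbbk$-linear monoidal functor $\mu$ from $\mathcal{NB}_t$ to the monoidal category of $\Bbbk$-linear endofunctors of $\mathcal V$ and natural transformations; write $B$ also for $\mu(B)$ and $s_V=\mu(s)_V$. An object $L$ of $\mathcal V$ is special if $\mathrm{End}_{\mathcal V}(L)=\Bbbk$ and $\mathrm{End}_{\mathcal V}(BL)$ is finite-dimensional; $m_L(x)$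 denotes the (monic) minimal polynomial of $x_L:BL\to BL$ (equal to $1$ if $BL=0$). Let $b_r:=\cap\circ(1\star x^r)\circ\cup\in\mathrm{End}(\mathbb1)$ and $\mathbb O(u):=(-1)^t\big(1_{\mathbb1}-2u\sum_{r\ge0}u^{-r-1}b_r\big)\in\mathrm{End}(\mathbb1)[\![u^{-1}]\!]$. For special $L$, $\mu(\mathbb O(u))_L$ acts on $L$ as multiplication by a power series $\mathbb O_L(u)\in\Bbbk[\![u^{-1}]\!]$. *)

(* Defs.v *)
From mathcomp Require Import all_boot all_order all_algebra.
Set Implicit Arguments. Unset Strict Implicit. Unset Printing Implicit Defensive.
Import GRing.Theory.
Local Open Scope ring_scope.

Record klincat (k : fieldType) := KLinCat {
  Ob : Type;
  Hom : Ob -> Ob -> lmodType k;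
  comp : forall X Y Z, Hom Y Z -> Hom X Y -> Hom X Z;
  idm : forall X, Hom X X;
  compA : forall X Y Z W (h : Hom Z W) (g : Hom Y Z) (f : Hom X Y),
      comp h (comp g f) = comp (comp h g) f;
  comp1m : forall X Y (f : Hom X Y), comp (idm Y) f = f;
  compm1 : forall X Y (f : Hom X Y), comp f (idm X) = f;
  comp_linl : forall X Y Z (a : k) (g g' : Hom Y Z) (f : Hom X Y),
      comp (a *: g + g') f = a *: comp g f + comp g' f;
  comp_linr : forall X Y Z (a : k) (g : Hom Y Z) (f f' : Hom X Y),
      comp g (a *: f + f') = a *: comp g f + comp g f'
}.
Arguments comp {k C X Y Z} : rename.
Arguments idm {k C} X : rename.
Arguments Hom {k} C : rename.

(* A strict k-linear monoidal functor mu : NB_t -> End(C) is determined *)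
(* by the images of the generators, i.e. a k-linear endofunctor B of C  *)
(* and natural transformations x : B -> B, tau : B B -> B B,            *)
(* cap : B B -> Id, cup : Id -> B B satisfying the defining relations.  *)
(* Convention: mu(X * Y) = mu(X) o mu(Y), so that                       *)
(*   (f * 1_B)_V = f_{BV}    and    (1_B * f)_V = B(f_V).               *)
Record NBmodule (k : fieldType) (t : bool) (C : klincat k) := NBModule {
  Bo : Ob C -> Ob C;
  Bm : forall X Y, Hom C X Y -> Hom C (Bo X) (Bo Y);
  Bm_lin : forall X Y (a : k) (f g : Hom C X Y), Bm (a *: f + g) = a *: Bm f + Bm g;
  Bm_id : forall X, Bm (idm X) = idm (Bo X);
  Bm_comp : forall X Y Z (g : Hom C Y Z) (f : Hom C X Y),
      Bm (comp g f) = comp (Bm g) (Bm f);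
  xB : forall X, Hom C (Bo X) (Bo X);
  tauB : forall X, Hom C (Bo (Bo X)) (Bo (Bo X));
  capB : forall X, Hom C (Bo (Bo X)) X;
  cupB : forall X, Hom C X (Bo (Bo X));
  xB_nat : forall X Y (f : Hom C X Y), comp (xB Y) (Bm f) = comp (Bm f) (xB X);
  tauB_nat : forall X Y (f : Hom C X Y),
      comp (tauB Y) (Bm (Bm f)) = comp (Bm (Bm f)) (tauB X);
  capB_nat : forall X Y (f : Hom C X Y), comp (capB Y) (Bm (Bm f)) = comp f (capB X);
  cupB_nat : forall X Y (f : Hom C X Y), comp (cupB Y) f = comp (Bm (Bm f)) (cupB X);
  rel_tau2 : forall X, comp (tauB X) (tauB X) = 0;
  rel_braid : forall X,
      comp (tauB (Bo X)) (comp (Bm (tauB X)) (tauB (Bo X)))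
      = comp (Bm (tauB X)) (comp (tauB (Bo X)) (Bm (tauB X)));
  rel_bubble : forall X, comp (capB X) (cupB X) = (t%:R : k) *: idm X;
  rel_zig : forall X, comp (capB (Bo X)) (Bm (cupB X)) = idm (Bo X);
  rel_zag : forall X, comp (Bm (capB X)) (cupB (Bo X)) = idm (Bo X);
  rel_captau : forall X, comp (capB X) (tauB X) = 0;
  rel_pitch : forall X,
      comp (Bm (capB X)) (tauB (Bo X)) = comp (capB (Bo X)) (Bm (tauB X));
  rel_dot : forall X,
      comp (xB (Bo X)) (tauB X) - comp (tauB X) (Bm (xB X))
      = idm (Bo (Bo X)) - comp (cupB X) (capB X);
  rel_capdot : forall X,
      comp (capB X) (Bm (xB X)) = - comp (capB X) (xB (Bo X))
}.
Arguments Bo {k t C} _ _.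
Arguments Bm {k t C} _ {X Y} _.
Arguments xB {k t C} _ _.
Arguments tauB {k t C} _ _.
Arguments capB {k t C} _ _.
Arguments cupB {k t C} _ _.

Fixpoint endpow (k : fieldType) (C : klincat k) (X : Ob C) (f : Hom C X X) (n : nat)
  : Hom C X X :=
  match n with 0 => idm X | n'.+1 => comp f (endpow f n') end.

Definition poly_end (k : fieldType) (C : klincat k) (X : Ob C) (p : {poly k})
  (f : Hom C X X) : Hom C X X :=
  \sum_(i < size p) p`_i *: endpow f i.

Definition is_minpoly (k : fieldType) (C : klincat k) (X : Ob C) (f : Hom C X X)
  (m : {poly k}) : Prop :=
  m \is monic /\ poly_end m f = 0 /\
  (forall p : {poly k}, p != 0 -> poly_end p f = 0 -> (size m <= size p)%N).

Definition findim_hom (k : fieldType) (C : klincat k) (X Y : Ob C) : Prop :=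
  exists s : seq (Hom C X Y),
    forall f : Hom C X Y, exists c : nat -> k, f = \sum_(i < size s) c i *: s`_i.

Definition special (k : fieldType) (t : bool) (C : klincat k) (M : NBmodule t C)
  (L : Ob C) : Prop :=
  (idm L != 0 /\ forall f : Hom C L L, exists c : k, f = c *: idm L)
  /\ findim_hom (Bo M L) (Bo M L).

(* component at V of  b_r = cap o (1 * x^r) o cup *)
Definition bubble (k : fieldType) (t : bool) (C : klincat k) (M : NBmodule t C)
  (r : nat) (V : Ob C) : Hom C V V :=
  comp (capB M V) (comp (Bm M (endpow (xB M V) r)) (cupB M V)).

(* component at V of the coefficient of u^{-n} in
   O(u) = (-1)^t (1 - 2u sum_{r>=0} u^{-r-1} b_r) = (-1)^t (1 - 2 sum_r u^{-r} b_r) *)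
Definition Ocoef (k : fieldType) (t : bool) (C : klincat k) (M : NBmodule t C)
  (n : nat) (V : Ob C) : Hom C V V :=
  ((-1) ^+ t : k) *: (((n == 0%N)%:R : k) *: idm V - 2%:R *: bubble M n V).

(* For polynomials P, Q with Q monic and deg P <= deg Q, the series
   sum_n o n u^{-n} in k[[u^{-1}]] equals P(u)/Q(u), i.e.
   (sum_n o n u^{-n}) * Q(u) = P(u).  Writing w = u^{-1} and d = deg Q,
   this is (sum_n o n w^n) * (w^d Q(1/w)) = w^d P(1/w) in k[[w]]. *)
Definition rev_at (k : fieldType) (d : nat) (P : {poly k}) : {poly k} :=
  \poly_(j < d.+1) P`_(d - j).

Definition series_is_ratio (k : fieldType) (o : nat -> k) (P Q : {poly k}) : Prop :=
  forall n : nat,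
    \sum_(i < n.+1) o i * (rev_at (size Q).-1 Q)`_(n - i)
    = (rev_at (size Q).-1 P)`_n.

(* Main.v *)
Require Import Defs.
From mathcomp Require Import all_boot all_order all_algebra.
From mathcomp Require Import zify ring.
Import GRing.Theory.
Local Open Scope ring_scope.
Set Implicit Arguments. Unset Strict Implicit. Unset Printing Implicit Defensive.

Notation Hm := Defs.Hom.
Notation cmp := Defs.comp.

Section Gen.
Variables (k : fieldType) (C : klincat k).

Lemma compDl {X Y Z} (g g' : Hm C Y Z) (f : Hm C X Y) :
  cmp (g + g') f = cmp g f + cmp g' f.
Proof. by have := Defs.comp_linl 1 g g' f; rewrite !scale1r. Qed.
Lemma compDr {X Y Z} (g : Hm C Y Z) (f f' : Hm C X Y) :
  cmp g (f + f') = cmp g f + cmp g f'.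
Proof. by have := Defs.comp_linr 1 g f f'; rewrite !scale1r. Qed.
Lemma comp0l {X Y Z} (f : Hm C X Y) : cmp (0 : Hm C Y Z) f = 0.
Proof. by apply: (addrI (cmp 0 f)); rewrite -compDl !addr0. Qed.
Lemma comp0r {X Y Z} (g : Hm C Y Z) : cmp g (0 : Hm C X Y) = 0.
Proof. by apply: (addrI (cmp g 0)); rewrite -compDr !addr0. Qed.
Lemma compZl {X Y Z} a (g : Hm C Y Z) (f : Hm C X Y) :
  cmp (a *: g) f = a *: cmp g f.
Proof. by have := Defs.comp_linl a g 0 f; rewrite !addr0 comp0l addr0. Qed.
Lemma compZr {X Y Z} a (g : Hm C Y Z) (f : Hm C X Y) :
  cmp g (a *: f) = a *: cmp g f.
Proof. by have := Defs.comp_linr a g f 0; rewrite !addr0 comp0r addr0. Qed.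
Lemma compNl {X Y Z} (g : Hm C Y Z) (f : Hm C X Y) : cmp (- g) f = - cmp g f.
Proof. by rewrite -scaleN1r compZl scaleN1r. Qed.
Lemma compNr {X Y Z} (g : Hm C Y Z) (f : Hm C X Y) : cmp g (- f) = - cmp g f.
Proof. by rewrite -scaleN1r compZr scaleN1r. Qed.
Lemma compBl {X Y Z} (g g' : Hm C Y Z) (f : Hm C X Y) :
  cmp (g - g') f = cmp g f - cmp g' f.
Proof. by rewrite compDl compNl. Qed.
Lemma compBr {X Y Z} (g : Hm C Y Z) (f f' : Hm C X Y) :
  cmp g (f - f') = cmp g f - cmp g f'.
Proof. by rewrite compDr compNr. Qed.
Lemma comp_suml {X Y Z} (I : Type) (r : seq I) (P : pred I) (F : I -> Hm C Y Z)
  (f : Hm C X Y) : cmp (\sum_(i <- r | P i) F i) f = \sum_(i <- r | P i) cmp (F i) f.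
Proof. by apply: (big_morph (fun g => cmp g f)); [move=> ? ?; apply: compDl|apply: comp0l]. Qed.
Lemma comp_sumr {X Y Z} (I : Type) (r : seq I) (P : pred I) (F : I -> Hm C X Y)
  (g : Hm C Y Z) : cmp g (\sum_(i <- r | P i) F i) = \sum_(i <- r | P i) cmp g (F i).
Proof. by apply: (big_morph (fun f => cmp g f)); [move=> ? ?; apply: compDr|apply: comp0r]. Qed.

Lemma endpowSr {X} (f : Hm C X X) n : endpow f n.+1 = cmp (endpow f n) f.
Proof.
elim: n => [|n IH]; first by rewrite /= Defs.comp1m Defs.compm1.
change (cmp f (endpow f n.+1) = cmp (endpow f n.+1) f).
by rewrite {1}IH Defs.compA.
Qed.
Lemma endpowD {X} (f : Hm C X X) a b :
  endpow f (a + b) = cmp (endpow f a) (endpow f b).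
Proof.
elim: a => [|a IH] /=; first by rewrite Defs.comp1m.
by rewrite IH Defs.compA.
Qed.
Lemma endpow_comm {X} (f g : Hm C X X) n : cmp f g = cmp g f ->
  cmp (endpow f n) g = cmp g (endpow f n).
Proof.
move=> h; elim: n => [|n IH] /=; first by rewrite Defs.comp1m Defs.compm1.
by rewrite -Defs.compA IH !Defs.compA h.
Qed.

Definition pe {X} (f : Hm C X X) K (p : {poly k}) : Hm C X X :=
  \sum_(i < K) p`_i *: endpow f i.

Lemma pe_widen {X} (f : Hm C X X) {K} {p : {poly k}} : (size p <= K)%N -> poly_end p f = pe f K p.
Proof.
move=> hK; rewrite /poly_end /pe (big_ord_widen _ (fun i => p`_i *: endpow f i) hK).
rewrite big_mkcond; apply: eq_bigr => i _; case: ifP => // /negbT.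
by rewrite -leqNgt => hi; rewrite nth_default // scale0r.
Qed.

Lemma poly_end_lin {X} (f : Hm C X X) a (p q : {poly k}) :
  poly_end (a *: p + q) f = a *: poly_end p f + poly_end q f.
Proof.
pose K := (size p + size q)%N.
have hp : (size p <= K)%N by rewrite /K leq_addr.
have hq : (size q <= K)%N by rewrite /K leq_addl.
have hpq : (size (a *: p + q)%R <= K)%N.
  apply: (leq_trans (size_polyD _ _)); rewrite geq_max hq andbT.
  exact: (leq_trans (size_scale_leq _ _) hp).
rewrite !(pe_widen f hp, pe_widen f hq, pe_widen f hpq) /pe scaler_sumr -big_split /=.
by apply: eq_bigr => i _; rewrite coefD coefZ scalerDl scalerA.
Qed.

Lemma poly_end0 {X} (f : Hm C X X) : poly_end 0 f = 0.
Proof. by rewrite /poly_end size_poly0 big_ord0. Qed.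
Lemma poly_endZ {X} (f : Hm C X X) a (p : {poly k}) : poly_end (a *: p) f = a *: poly_end p f.
Proof. by rewrite -[a *: p]addr0 poly_end_lin poly_end0 addr0. Qed.
Lemma poly_endD {X} (f : Hm C X X) (p q : {poly k}) : poly_end (p + q) f = poly_end p f + poly_end q f.
Proof. by rewrite -[p]scale1r poly_end_lin !scale1r. Qed.
Lemma poly_endB {X} (f : Hm C X X) (p q : {poly k}) : poly_end (p - q) f = poly_end p f - poly_end q f.
Proof. by rewrite -[in LHS]scaleN1r poly_endD poly_endZ scaleN1r. Qed.
Lemma poly_end_sum {X} (f : Hm C X X) (I : Type) (r : seq I) (P : pred I) (F : I -> {poly k}) :
  poly_end (\sum_(i <- r | P i) F i) f = \sum_(i <- r | P i) poly_end (F i) f.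
Proof.
apply: (big_morph (fun p => poly_end p f)); [move=> ? ?; apply: poly_endD|apply: poly_end0].
Qed.
Lemma poly_end_sum_ord {X} (f : Hm C X X) n (F : nat -> {poly k}) :
  poly_end (\sum_(i < n) F i) f = \sum_(i < n) poly_end (F i) f.
Proof.
elim: n => [|n IH]; first by rewrite !big_ord0 poly_end0.
by rewrite !big_ord_recr /= poly_endD IH.
Qed.
Lemma poly_endXn {X} (f : Hm C X X) j : poly_end 'X^j f = endpow f j.
Proof.
rewrite /poly_end size_polyXn big_ord_recr /= coefXn eqxx scale1r big1 ?add0r //.
by move=> i _; rewrite coefXn (ltn_eqF (ltn_ord i)) scale0r.
Qed.
End Gen.

Section Alg.
Variable k : fieldType.

Lemma sum_delta N j (F : nat -> k) :
  \sum_(n < N) ((n : nat) == j)%:R * F n = (j < N)%:R * F j.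
Proof.
elim: N => [|N IH]; first by rewrite big_ord0 ltn0 mul0r.
rewrite big_ord_recr /= IH ltnS.
by case: (ltngtP j N) => [_|_|->] /=; rewrite ?mul1r ?mul0r ?addr0 ?add0r.
Qed.

Lemma sum_sign n : \sum_(a < n) ((-1)^+a : k) = (odd n)%:R.
Proof.
elim: n => [|n IH]; first by rewrite big_ord0.
rewrite big_ord_recr /= IH -signr_odd.
by case: (odd n) => /=; rewrite ?expr1 ?expr0 ?addrN ?add0r.
Qed.

Lemma sum_widen n N (F : nat -> k) : (n <= N)%N ->
  \sum_(a < n) F a = \sum_(a < N) (a < n)%:R * F a.
Proof.
move=> h; rewrite (big_ord_widen _ F h) big_mkcond; apply: eq_bigr => i _.
by case: ifP => _; rewrite ?mul1r ?mul0r.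
Qed.

Variables (m : {poly k}) (beta : nat -> k).
Local Notation N := (size m).

Definition Rp n : {poly k} :=
  \sum_(a < n) (-1)^+a *: ('X^(n.-1) - beta a *: 'X^(n.-1 - a)).
Definition Rm : {poly k} := \sum_(n < N) (m`_n * (-1)^+n) *: Rp n.

Lemma Rm_coef b : Rm`_b =
  (b.+1 < N)%:R * (m`_b.+1 * (-1)^+b.+1 * (odd b.+1)%:R) -
  \sum_(a < N) (a + b.+1 < N)%N%:R * (m`_(a + b.+1)%N * (-1)^+(a + b.+1)%N * (-1)^+a * beta a).
Proof.
rewrite /Rm coef_sum.
transitivity (\sum_(n < N) (m`_n * (-1)^+n) * ((odd n)%:R * (b == n.-1)%:R) -
  \sum_(n < N) \sum_(a < n) (m`_n * (-1)^+n * (-1)^+a * beta a) * (b == (n.-1 - a)%N)%:R).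
  rewrite -sumrB; apply: eq_bigr => n _; rewrite coefZ /Rp coef_sum.
  under eq_bigr do rewrite coefZ coefB coefZ !coefXn mulrBr.
  rewrite sumrB -mulr_suml sum_sign mulrBr mulr_sumr; congr (_ - _).
  by apply: eq_bigr => a _; ring.
congr (_ - _).
  rewrite -(sum_delta _ _ (fun n => m`_n * (-1)^+n * (odd n)%:R)); apply: eq_bigr => n _.
  case: (nat_of_ord n) => [|n'] /=; first by rewrite !mul0r mulr0.
  rewrite eqSS eq_sym; case: eqP => [->|_]; rewrite ?mul0r ?mulr0 //.
  by rewrite !mulr1 mul1r mulrC.
under eq_bigr => n _ do rewrite (@sum_widen n N (fun a => m`_n * (-1)^+n * (-1)^+a * beta a * (b == (n.-1 - a)%N)%:R)) ?(ltnW (ltn_ord n)) //.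
rewrite exchange_big /=; apply: eq_bigr => a _.
rewrite -(sum_delta _ _ (fun n => m`_n * (-1)^+n * (-1)^+a * beta a)); apply: eq_bigr => n _.
have -> : ((a < n)%:R * ((m`_n * (-1) ^+ n * (-1) ^+ a * beta a) * (b == (n.-1 - a)%N)%:R) : k)
   = ((n : nat) == (a + b.+1)%N)%:R * (m`_n * (-1) ^+ n * (-1) ^+ a * beta a).
  have -> : ((n : nat) == (a + b.+1)%N) = (a < n)%N && (b == (n.-1 - a)%N).
    by apply/idP/idP => [/eqP -> | /andP [h1 /eqP h2]]; apply/andP || apply/eqP; lia.
  by case: (a < n)%N; case: (b == (n.-1 - a)%N); rewrite /= ?mul1r ?mul0r ?mulr1 ?mulr0.
case: eqP => [->|_]; by rewrite ?mul1r ?mul0r.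
Qed.
End Alg.

Section NB.
Variables (k : fieldType) (t : bool) (C : klincat k) (M : NBmodule t C).

Lemma BmD {Y Z} (f g : Hm C Y Z) : Bm M (f + g) = Bm M f + Bm M g.
Proof. by have := Bm_lin M 1 f g; rewrite !scale1r. Qed.
Lemma Bm0 {Y Z} : Bm M (0 : Hm C Y Z) = 0.
Proof. by apply: (addrI (Bm M (0 : Hm C Y Z))); rewrite -BmD !addr0. Qed.
Lemma BmZ {Y Z} a (f : Hm C Y Z) : Bm M (a *: f) = a *: Bm M f.
Proof. by have := Bm_lin M a f 0; rewrite !addr0 Bm0 addr0. Qed.
Lemma BmB {Y Z} (f g : Hm C Y Z) : Bm M (f - g) = Bm M f - Bm M g.
Proof. by rewrite -!scaleN1r BmD BmZ. Qed.
Lemma Bm_sum {Y Z} (I : Type) (r : seq I) (P : pred I) (F : I -> Hm C Y Z) :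
  Bm M (\sum_(i <- r | P i) F i) = \sum_(i <- r | P i) Bm M (F i).
Proof. by apply: (big_morph (Bm M)); [move=> ? ?; apply: BmD|apply: Bm0]. Qed.
Lemma Bm_endpow {Y} (f : Hm C Y Y) n : Bm M (endpow f n) = endpow (Bm M f) n.
Proof. by elim: n => [|n IH] /=; rewrite ?Bm_id // Bm_comp IH. Qed.

Variable L : Ob C.
Local Notation X := (xB M L).
Local Notation y1 := (xB M (Bo M L)).
Local Notation y2 := (Bm M (xB M L)).
Local Notation tau := (tauB M L).
Local Notation cap := (capB M L).
Local Notation cup := (cupB M L).

Definition Gam (h : Hm C (Bo M (Bo M L)) L) : Hm C (Bo M L) (Bo M L) :=
  cmp (Bm M h) (cupB M (Bo M L)).

Lemma GamD h h' : Gam (h + h') = Gam h + Gam h'.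
Proof. by rewrite /Gam BmD compDl. Qed.
Lemma GamZ a h : Gam (a *: h) = a *: Gam h.
Proof. by rewrite /Gam BmZ compZl. Qed.
Lemma Gam0 : Gam 0 = 0.
Proof. by rewrite /Gam Bm0 comp0l. Qed.
Lemma GamB h h' : Gam (h - h') = Gam h - Gam h'.
Proof. by rewrite /Gam BmB compBl. Qed.
Lemma Gam_sum (I : Type) (r : seq I) (P : pred I) F :
  Gam (\sum_(i <- r | P i) F i) = \sum_(i <- r | P i) Gam (F i).
Proof. by rewrite /Gam Bm_sum comp_suml. Qed.
Lemma Gam_capB g : Gam (cmp cap (Bm M g)) = g.
Proof.
rewrite /Gam Bm_comp -Defs.compA -cupB_nat Defs.compA rel_zag.
by rewrite Defs.comp1m.
Qed.
Lemma Gam_cap : Gam cap = idm (Bo M L).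
Proof. by rewrite /Gam rel_zag. Qed.
Lemma Gam_y2 h : Gam (cmp h y2) = cmp (Gam h) X.
Proof. by rewrite /Gam Bm_comp -Defs.compA -cupB_nat Defs.compA. Qed.

Lemma y12 : cmp y1 y2 = cmp y2 y1.
Proof. exact: xB_nat. Qed.

Lemma cap_y1n n : cmp cap (endpow y1 n) = (-1)^+n *: cmp cap (endpow y2 n).
Proof.
elim: n => [|n IH]; first by rewrite scale1r.
rewrite [endpow y1 n.+1]/= Defs.compA.
have -> : cmp cap y1 = - cmp cap y2 by rewrite (rel_capdot M L) opprK.
rewrite compNl -Defs.compA -(endpow_comm n y12) Defs.compA IH compZl -Defs.compA.
by rewrite -endpowSr exprS mulN1r scaleNr.
Qed.

Variable beta : nat -> k.
Hypothesis hb : forall n, bubble M n L = beta n *: idm L.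

Lemma step1 n : Gam (cmp cap (cmp (endpow y1 n) tau)) =
  \sum_(a < n) (-1)^+a *: (endpow X n.-1 - beta a *: endpow X (n.-1 - a)).
Proof.
elim: n => [|n IH].
  by rewrite big_ord0 /= Defs.comp1m rel_captau Gam0.
have hd : cmp y1 tau = cmp tau y2 + (idm _ - cmp cup cap).
  by rewrite -(rel_dot M L) addrC subrK.
have hbub : cmp (cmp cap (endpow y2 n)) cup = beta n *: idm L.
  by rewrite -hb /bubble Bm_endpow Defs.compA.
have E : cmp cap (cmp (endpow y1 n.+1) tau) =
   cmp (cmp cap (cmp (endpow y1 n) tau)) y2 +
   ((-1)^+n *: cmp cap (Bm M (endpow X n)) - ((-1)^+n * beta n) *: cap).
  rewrite endpowSr -(Defs.compA (endpow y1 n)) hd !(compDr, compBr, compNr) Defs.compm1.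
  rewrite !Defs.compA cap_y1n !compZl hbub compZl Defs.comp1m scalerA Bm_endpow.
  done.
rewrite E GamD GamB !GamZ Gam_y2 Gam_capB Gam_cap IH comp_suml big_ord_recr /=.
congr (_ + _).
  apply: eq_bigr => a _; have ha := ltn_ord a.
  rewrite compZl compBl compZl -!endpowSr.
  by congr (_ *: (endpow _ _ - _ *: endpow _ _)); lia.
by rewrite subnn scalerBr scalerA.
Qed.


Variable m : {poly k}.
Hypothesis hm0 : poly_end m X = 0.

Lemma step2 : \sum_(n < size m) (m`_n * (-1)^+n) *: Gam (cmp cap (cmp (endpow y1 n) tau)) = 0.
Proof.
under eq_bigr do rewrite -GamZ.
rewrite -Gam_sum.
have -> : \sum_(n < size m) (m`_n * (-1)^+n) *: cmp cap (cmp (endpow y1 n) tau)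
     = cmp (cmp cap (Bm M (poly_end m X))) tau.
  rewrite /poly_end Bm_sum comp_sumr comp_suml; apply: eq_bigr => n _.
  rewrite BmZ compZr compZl Defs.compA cap_y1n compZl scalerA Bm_endpow.
  by rewrite -mulrA -expr2 sqrr_sign mulr1.
by rewrite hm0 Bm0 comp0r comp0l Gam0.
Qed.

Lemma Rp_eval n : poly_end (Rp beta n) X = Gam (cmp cap (cmp (endpow y1 n) tau)).
Proof.
rewrite step1 /Rp (poly_end_sum_ord X n (fun a => (-1)^+a *: ('X^(n.-1) - beta a *: 'X^(n.-1 - a)))).
apply: eq_big => // a _.
by rewrite poly_endZ poly_endB poly_endZ !poly_endXn.
Qed.

Lemma Rm_eval : poly_end (Rm m beta) X = 0.
Proof.
rewrite /Rm poly_end_sum -[in RHS]step2; apply: eq_big => // n _.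
by rewrite poly_endZ Rp_eval.
Qed.


Hypothesis hmon : m \is monic.
Hypothesis hmin : forall p : {poly k}, p != 0 -> poly_end p X = 0 -> (size m <= size p)%N.
Hypothesis hid : idm L != 0.

Lemma Rm0 : Rm m beta = 0.
Proof.
apply/eqP; apply: contraT => hne.
have h1 := hmin hne Rm_eval.
have h2 : (size (Rm m beta) <= (size m).-1)%N.
  apply/leq_sizeP => j hj; rewrite Rm_coef.
  rewrite (_ : (j.+1 < size m)%N = false) ?mul0r ?sub0r; last by lia.
  rewrite big1 ?oppr0 // => a _; rewrite (_ : (a + j.+1 < size m)%N = false) ?mul0r //.
  lia.
have h3 : (0 < size m)%N by rewrite size_poly_gt0 monic_neq0.
lia.
Qed.

Lemma mN j : (j < size m)%N%:R * m`_j = m`_j.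
Proof. by case: ltnP => h; rewrite ?mul1r // nth_default ?mulr0. Qed.

Lemma ID_pos s : (0 < s)%N -> \sum_(a < size m) m`_(a + s) * beta a = (odd s)%:R * m`_s.
Proof.
case: s => [//|b] _.
have h := Rm_coef m beta b; rewrite Rm0 coef0 in h.
rewrite !mulrA mN in h.
have e : forall z w x y : k, z * z = 1 -> x * (z * w) * z * y = w * (x * y).
  move=> z w x y hz; transitivity ((z * z) * (w * (x * y))); first by ring.
  by rewrite hz mul1r.
rewrite (eq_bigr (fun a : 'I_(size m) => (-1)^+b.+1 * (m`_(a + b.+1) * beta a))) in h; last first.
  move=> a _; rewrite !mulrA mN exprD e; first by rewrite mulrA.
  by rewrite -expr2 sqrr_sign.
rewrite -mulr_sumr in h.
apply: (@mulfI _ ((-1)^+b.+1)); first by rewrite signr_eq0.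
have := esym h; move/eqP; rewrite subr_eq0 => /eqP <-; ring.
Qed.

Lemma IDq q : \sum_(a < size m) m`_a * beta (a + q) = 0.
Proof.
have h : cmp cap (cmp (Bm M (cmp (poly_end m X) (endpow X q))) cup) = 0.
  by rewrite hm0 comp0l Bm0 comp0l comp0r.
rewrite /poly_end comp_suml Bm_sum comp_suml comp_sumr in h.
have h2 : (\sum_(a < size m) m`_a * beta (a + q)) *: idm L = 0.
  rewrite -h scaler_suml; apply: eq_big => // a _.
  by rewrite compZl BmZ compZl compZr -endpowD -scalerA -hb.
move/eqP: h2; rewrite scaler_eq0 (negbTE hid) orbF; by move/eqP.
Qed.

Lemma ID s : \sum_(a < size m) m`_(a + s) * beta a = (odd s)%:R * m`_s.
Proof.
case: s => [|s]; last exact: ID_pos.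
rewrite mul0r -[RHS](IDq 0); apply: eq_big => // a _; by rewrite !addn0.
Qed.

End NB.

Section Fin.
Variable k : fieldType.

Lemma mNf (m : {poly k}) j : (j < size m)%N%:R * m`_j = m`_j.
Proof. by case: ltnP => h; rewrite ?mul1r // nth_default ?mulr0. Qed.

Lemma coef_compN (m : {poly k}) j : (m \Po (- 'X))`_j = (-1)^+j * m`_j.
Proof.
rewrite comp_polyE coef_sum.
transitivity (\sum_(i < size m) ((i : nat) == j)%:R * ((-1)^+i * m`_i)).
  apply: eq_big => // i _.
  rewrite -scaleN1r exprZn coefZ coefZ coefXn eq_sym.
  by case: eqP => _; rewrite ?mulr1 ?mulr0 ?mul1r ?mul0r // mulrC.
by rewrite (sum_delta _ _ (fun i => (-1)^+i * m`_i)) mulrCA mNf.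
Qed.

Lemma coef_rev d (p : {poly k}) j : (rev_at d p)`_j = (j < d.+1)%N%:R * p`_(d - j).
Proof. by rewrite /rev_at coef_poly; case: ifP; rewrite ?mul1r ?mul0r. Qed.
End Fin.

Theorem theorem3p10 (k : fieldType) (hk2 : (2%:R : k) != 0) (t : bool)
  (C : klincat k) (M : NBmodule t C) (L : Ob C)
  (hL : special M L)
  (m : {poly k}) (hm : is_minpoly (xB M L) m)
  (o : nat -> k) (ho : forall n : nat, Ocoef M n L = o n *: idm L) :
  series_is_ratio o (((-1) ^+ t : k) *: (m \Po (- 'X))) m.
Proof.
move: hL => [[hid _] _]; case: hm => [hmon [hm0 hmin]].
pose beta n := ((n == 0%N)%:R - (-1)^+t * o n) / 2%:R.
have hb : forall n, bubble M n L = beta n *: idm L.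
  move=> n; have h := ho n; rewrite /Ocoef in h.
  have h' : 2%:R *: bubble M n L = ((n == 0%N)%:R - (-1)^+t * o n) *: idm L.
    rewrite scalerBl -(scalerA ((-1)^+t)) -h scalerA -expr2 sqrr_sign scale1r.
    by rewrite opprB addrCA subrr addr0.
  rewrite -[LHS]scale1r -[in LHS](mulVf hk2) -scalerA h' scalerA /beta mulrC.
  done.
have ho' : forall i, o i = (-1)^+t * (((i : nat) == 0%N)%:R - 2%:R * beta i).
  move=> i; rewrite /beta [2%:R * _]mulrC mulfVK // opprB addrCA subrr addr0.
  by rewrite mulrA -expr2 sqrr_sign mul1r.
have IDs := ID hb hm0 hmon hmin hid.
have IDz := IDq hb hm0 hid.
have hN : (0 < size m)%N by rewrite size_poly_gt0 monic_neq0.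
set d := (size m).-1.
have hNd : size m = d.+1 by rewrite /d prednK.
move=> n.
rewrite coef_rev coefZ coef_compN.
under eq_bigr do rewrite ho' coef_rev.
rewrite -/d.
pose R i := ((n - i < d.+1)%N%:R * m`_(d - (n - i))).
pose K := \sum_(i < n.+1) beta i * R i.
have -> : \sum_(i < n.+1) (-1)^+t * (((i : nat) == 0%N)%:R - 2%:R * beta i) * R i =
   \sum_(i < n.+1) ((-1)^+t * (((i : nat) == 0%N)%:R * R i)) - ((-1)^+t * 2%:R) * K.
  rewrite /K mulr_sumr -sumrB; apply: eq_big => // i _; rewrite /R; ring.
rewrite big_ord_recl big1 /=; last by move=> i _; rewrite mul0r mulr0.
rewrite addr0 /R subn0.
case: (ltnP n d.+1) => hn.
  have hK : K = (odd (d - n))%:R * m`_(d - n).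
    rewrite -IDs /K.
    transitivity (\sum_(i < n.+1) m`_(i + (d - n)) * beta i).
      apply: eq_big => // i _; rewrite /R; have hi := ltn_ord i.
      rewrite (_ : (n - i < d.+1)%N = true); last by lia.
      rewrite mul1r mulrC; congr (m`_ _ * _); lia.
    rewrite (@sum_widen k n.+1 (size m) (fun i => m`_(i + (d - n)) * beta i)); last by lia.
    apply: eq_big => // i _; case: ltnP => hi; rewrite ?mul1r ?mul0r //.
    rewrite nth_default ?mul0r //.
    by move: hi; move: (nat_of_ord i) => j hj; rewrite hNd; lia.
  rewrite hK -(signr_odd _ (d - n)); case: (odd (d - n)) => /=; rewrite ?expr1 ?expr0; ring.
have hK : K = 0.
  rewrite /K -[RHS](IDz (n - d)%N) -(@big_mkord _ 0 +%R n.+1 xpredT (fun i => beta i * R i)).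
  rewrite (@big_cat_nat _ _ _ (n - d)%N 0 n.+1) /=; [|by []|by lia].
  rewrite big1_seq ?add0r; last first.
    move=> i /andP [_]; rewrite mem_index_iota => /andP [_ hi].
    by rewrite /R (_ : (n - i < d.+1)%N = false) ?mul0r ?mulr0 //; lia.
  rewrite -{1}(add0n (n - d)%N) big_addn big_mkord.
  rewrite (_ : (n.+1 - (n - d) = size m)%N); last by lia.
  apply: eq_big => // i _; rewrite /R; have hi := ltn_ord i.
  rewrite (_ : (n - (i + (n - d)) < d.+1)%N = true); last by lia.
  rewrite mul1r mulrC; congr (m`_ _ * _).
  by move: hi; move: (nat_of_ord i) => j hj; rewrite hNd in hj; lia.
rewrite hK /=.
by rewrite !mul0r !mulr0 subr0.
Qed.
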